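(* An oriented graph $G$ is an in-forest if and only if it is a $1$-Burling oriented graph.
   Context: Oriented graphs are finite, without loops, multiple arcs or pairs of opposite arcs. An in-tree is an oriented graph obtained from a rooted tree by orienting every edge towards the root (edge $uv$ is oriented from $u$ to $v$ iff $v$ lies on the tree path from $u$ to the root). An in-forest is an oriented forest whose connected components are in-trees (the empty graph is an in-forest). In a rooted tree $T$ with root $r$, each non-root vertex $v$ has a parent $p(v)$; children, leaves, ancestors and descendants are as usual. A branch is a sequence $v_1\dots v_k$ ($k\ge0$) with $v_i$ the parent of $v_{i+1}$; it starts at $v_1$. A Burling tree is a 4-tuple $(T,r,\ell,c)$: $T$ a rooted tree with root $r$; $\ell$ assigns to each non-leaf vertex $v$ one of its children $\ell(v)$ (the last-born of $v$); $c$ assigns to every vertex $v$ that is neither the root nor a last-born the vertex-set of a (possibly empty) branch starting at $\ell(p(v))$, and $c(v)=\emptyset$ if $v$ is the root or a last-born. The oriented graph fully derived from it has vertex-set $V(T)$ and an arc $uv$ iff $v\in c(u)$; an oriented graph is derived from the Burling tree if it is an induced subgraph of the fully derived one. An oriented graph $G$ is a $k$-Burling oriented graph if it can be derived from a Burling tree $T$ such that every branch of $T$ contains at most $k$ vertices of $G$. *)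

(* Defs.v *)
From mathcomp Require Import all_boot.
Set Implicit Arguments. Unset Strict Implicit. Unset Printing Implicit Defensive.

(* An oriented graph on a finite vertex type V: an arc relation without loops
   and without pairs of opposite arcs (multiple arcs are impossible for a rel). *)
Definition oriented_graph (V : finType) (arc : rel V) : Prop :=
  (forall v, ~~ arc v v) /\ (forall u v, arc u v -> ~~ arc v u).

Fixpoint pariter (W : Type) (par : W -> option W) (n : nat) (v : W) : option W :=
  match n with
  | 0 => Some v
  | n'.+1 => obind par (pariter par n' v)
  end.

(* A rooted forest given by its parent function (roots: par v = None). *)
Definition rooted_forest (W : Type) (par : W -> option W) : Prop :=
  forall v, exists n, pariter par n v = None.

Definition rooted_tree (W : Type) (par : W -> option W) (r : W) : Prop :=
  par r = None /\ forall v, exists n, pariter par n v = Some r.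

(* In-forest: obtained from a rooted forest by orienting every edge towards the
   root of its component, i.e. arcs are exactly u -> p(u). *)
Definition in_forest (V : finType) (arc : rel V) : Prop :=
  exists par : V -> option V,
    rooted_forest par /\ forall u v, arc u v = (par u == Some v).

Definition branch (W : eqType) (par : W -> option W) (s : seq W) : bool :=
  sorted (fun a b => par b == Some a) s.

Definition is_leaf (W : finType) (par : W -> option W) (v : W) : bool :=
  [forall w, par w != Some v].

Definition is_last_born (W : finType) (par : W -> option W) (l : W -> W) (w : W)
  : bool :=
  if par w is Some v then l v == w else false.

Definition burling_tree (W : finType) (par : W -> option W) (r : W)
    (l : W -> W) (c : W -> {set W}) : Prop :=
  [/\ rooted_tree par r,
      (forall v, ~~ is_leaf par v -> par (l v) = Some v) &
      (forall v,
         if (v == r) || is_last_born par l v then c v = set0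
         else exists s : seq W,
           [/\ branch par s,
               (if s is x :: _ then Some x = omap l (par v) else True) &
               c v = [set x in s]])].

(* G is a k-Burling oriented graph: G is (isomorphic, via the injection f, to)
   an induced subgraph of the graph fully derived from a Burling tree, and every
   branch of the tree contains at most k vertices of G. *)
Definition k_burling (k : nat) (V : finType) (arc : rel V) : Prop :=
  exists (W : finType) (par : W -> option W) (r : W) (l : W -> W)
         (c : W -> {set W}) (f : V -> W),
    [/\ burling_tree par r l c,
        injective f,
        (forall u v, arc u v = (f v \in c (f u))) &
        (forall s : seq W, branch par s ->
           #|[set x in s | x \in codom f]| <= k)].

(* Main.v *)
Require Import Defs.
From mathcomp Require Import all_boot zify.
Set Implicit Arguments. Unset Strict Implicit.

Lemma pariterS (W : Type) (par : W -> option W) n v :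
  pariter par n.+1 v = obind (pariter par n) (par v).
Proof.
elim: n => [|n IH]; first by rewrite /=; case: (par v).
change (obind par (pariter par n.+1 v) = obind (pariter par n.+1) (par v)).
rewrite IH; by case: (par v).
Qed.

Lemma pariter_add (W : Type) (par : W -> option W) m n v :
  pariter par (m + n) v = obind (pariter par m) (pariter par n v).
Proof.
elim: m => [|m IH]; first by rewrite /=; case: (pariter par n v).
change (obind par (pariter par (m + n) v) = obind (pariter par m.+1) (pariter par n v)).
rewrite IH; by case: (pariter par n v).
Qed.

Lemma pariter_root_uniq (W : Type) (par : W -> option W) r v n m :
  par r = None -> pariter par n v = Some r -> pariter par m v = Some r -> n = m.
Proof.
move=> hr.
have key : forall a b, a < b -> pariter par a v = Some r -> pariter par b v = Some r -> False.
  move=> a b hab ha hb.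
  have : b = (b - a).-1.+1 + a by lia.
  move=> e; move: hb; rewrite e pariter_add ha.
  change (pariter par (b-a).-1.+1 r = Some r -> False); by rewrite pariterS hr.
move=> hn hm; case: (ltngtP n m) => // h.
  by case: (key _ _ h hn hm).
by case: (key _ _ h hm hn).
Qed.

Lemma branch_anc (W : eqType) (par : W -> option W) a t x :
  branch par (a :: t) -> x \in a :: t -> exists i, pariter par i x = Some a.
Proof.
elim: t a => [|b t IH] a /=.
  by rewrite inE => _ /eqP ->; exists 0.
move=> /andP [/eqP hb hp]; rewrite inE => /orP [/eqP ->|hx]; first by exists 0.
case: (IH b hp hx) => i hi; exists i.+1; by rewrite /= hi.
Qed.

Definition Wpar (V : finType) (M : nat) (d : V -> nat) (x : ('I_M.+1 + V)%type)
  : option ('I_M.+1 + V)%type :=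
  match x with
  | inl i => if i < M then Some (inl (inord i.+1)) else None
  | inr v => Some (inl (inord (d v)))
  end.

Definition Wl (V : finType) (M : nat) (x : ('I_M.+1 + V)%type) : ('I_M.+1 + V)%type :=
  match x with
  | inl i => if (i : nat) == 0 then x else inl (inord i.-1)
  | inr _ => x
  end.

Definition Wc (V : finType) (M : nat) (par : V -> option V) (d : V -> nat)
  (x : ('I_M.+1 + V)%type) : {set ('I_M.+1 + V)} :=
  match x with
  | inl _ => set0
  | inr u => if par u is Some v then [set y in [:: inl (inord (d v)); inr v]] else set0
  end.

Arguments Wpar {V} M d x.
Arguments Wl {V} M x.
Arguments Wc {V} M par d x.

Lemma Wbranch (V : finType) M (d : V -> nat) (s : seq ('I_M.+1 + V)%type) :
  branch (Wpar M d) s -> #|[set x in s | x \in codom inr]| <= 1.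
Proof.
rewrite /branch.
elim: s => [|a t IH] hs.
  rewrite (_ : [set x in [::] | _] = set0) ?cards0 //; apply/setP => x; rewrite !inE.
case: a hs => [i|x] hs.
  rewrite (_ : [set y in inl i :: t | y \in codom inr] = [set y in t | y \in codom inr]).
    by apply: IH; exact: path_sorted hs.
  apply/setP => y; rewrite !inE; case: eqP => [->|] //=.
  have -> : (inl i \in codom (@inr 'I_M.+1 V)) = false.
    by apply/negbTE/codomP => -[z].
  by rewrite andbF.
case: t IH hs => [|b t] _ hs.
  apply: (leq_trans (subset_leq_card (B:=[set inr x]) _)); last by rewrite cards1.
  by apply/subsetP => y; rewrite !inE => /andP [].
move: hs => /= /andP [+ _]; case: b => [j|z] /=; last by [].
by case: ifP.
Qed.

Lemma forest_burling (V : finType) (arc : rel V) : in_forest arc -> k_burling 1 arc.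
Proof.
case=> par [hF harc].
have hF' : forall v, exists n, pariter par n v == None.
  by move=> v; case: (hF v) => n hn; exists n; apply/eqP.
pose d v := ex_minn (hF' v).
have dP : forall v k, (pariter par k v == None) = (d v <= k).
  move=> v k; rewrite /d; case: ex_minnP => m hm hmin.
  apply/idP/idP; first exact: hmin.
  move=> hk; have -> : k = (k - m) + m by lia.
  by rewrite pariter_add (eqP hm).
have d1 : forall v, 0 < d v.
  move=> v; have := dP v 0; rewrite /=; case: (d v) => //.
have dpar : forall u v, par u = Some v -> d u = (d v).+1.
  move=> u v h.
  have H : forall k, (d u <= k.+1) = (d v <= k).
    by move=> k; rewrite -dP -dP pariterS h.
  have := H (d v); have := H (d u).-1; have := d1 u; rewrite leqnn; lia.
pose M := \max_(x : V) d x.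
have dM : forall x, d x <= M by move=> x; apply: (leq_bigmax (F:=d)).
have hit : forall k (i : 'I_M.+1), i + k <= M ->
    pariter (Wpar M d) k (inl i) = Some (inl (inord (i + k))).
  elim=> [|k IH] i hk.
    by rewrite addn0 /=; congr (Some (inl _)); apply: val_inj; rewrite /= inordK.
  rewrite /= IH; last lia.
  rewrite /= inordK; last lia.
  have -> : i + k < M by lia.
  by rewrite addnS.
exists ('I_M.+1 + V)%type, (Wpar M d), (inl ord_max), (Wl M), (Wc M par d), inr.
split.
- split.
  + split; first by rewrite /= ltnn.
    case=> [i|x].
      exists (M - i); rewrite hit; last by have := ltn_ord i; lia.
      congr (Some (inl _)); apply: val_inj; rewrite /= inordK //; have := ltn_ord i; lia.
    exists (M - d x).+1; rewrite pariterS /= hit; rewrite inordK ?ltnS ?dM //; last first.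
      have := dM x; lia.
    congr (Some (inl _)); apply: val_inj; rewrite /= inordK //; have := dM x; lia.
  + case=> [i|x] /=.
      case: eqP => [i0|ni0] hleaf.
        exfalso; move/negP: hleaf; apply; apply/forallP => -[j|y] /=.
          case: ifP => // hj; apply/eqP => -[] /(congr1 val); rewrite /= inordK ?i0 //.
        apply/eqP => -[] /(congr1 val); rewrite /= inordK ?i0; last by rewrite ltnS dM.
        by have := d1 y; lia.
      rewrite /= inordK; last by have := ltn_ord i; lia.
      have -> : i.-1 < M by have := ltn_ord i; lia.
      congr (Some (inl _)); apply: val_inj; rewrite /= inordK; last by have := ltn_ord i; lia.
      lia.
    move=> hleaf; exfalso; move/negP: hleaf; apply; apply/forallP => -[j|y] /=.
      by case: ifP.
    by [].
  + case=> [i|u] /=.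
      case: ifP => _ //; exists [::]; split => //; apply/setP => y; rewrite !inE.
    have -> : is_last_born (Wpar M d) (Wl M) (inr u) = false.
      by rewrite /is_last_born /=; case: ifP.
    case hpu: (par u) => [v|]; last by exists [::]; split => //; apply/setP => y; rewrite !inE.
    exists [:: inl (inord (d v)); inr v]; split => //.
      by rewrite /branch /= eqxx.
    have hu := dM u; rewrite (dpar _ _ hpu) in hu.
    by rewrite /= (dpar _ _ hpu) inordK.
- by move=> x y [].
- move=> u v; rewrite harc /=; case: (par u) => [w|]; rewrite ?inE //.
- exact: Wbranch.
Qed.

Lemma burling_forest (V : finType) (arc : rel V) : k_burling 1 arc -> in_forest arc.
Proof.
case=> W [par [r [l [c [f [[[hr hT] hl hc] finj harc hbr]]]]]].
have hT' : forall v, exists n, pariter par n v == Some r.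
  by move=> v; case: (hT v) => n hn; exists n; apply/eqP.
pose td v := ex_minn (hT' v).
have tdP : forall v, pariter par (td v) v = Some r.
  by move=> v; rewrite /td; case: ex_minnP => m /eqP.
have tdanc : forall i x y, pariter par i x = Some y -> td x = td y + i.
  move=> i x y h; apply: (pariter_root_uniq hr (tdP x)).
  by rewrite pariter_add h /= tdP.
have hstr : forall u v, arc u v -> exists s p,
   [/\ branch par (l p :: s), par (f u) = Some p, ~~ is_last_born par l (f u),
       f v \in l p :: s & c (f u) = [set x in l p :: s]].
  move=> u v; rewrite harc => hv.
  move: (hc (f u)); case: ifP => [_ h|/negbT]; first by rewrite h inE in hv.
  rewrite negb_or => /andP [_ hlb] [s [hs hhead hcs]].
  move: hv; rewrite hcs inE; case: s hs hhead hcs => // x t hs hhead hcs hv.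
  case hp: (par (f u)) hhead => [p|] //= [->] in hs hv hcs *.
  by exists t, p; split.
pose phi u := 2 * td (f u) + is_last_born par l (f u).
have hphi : forall u v, arc u v -> phi u < phi v.
  move=> u v /hstr [s [p [hs hp hlb hv hcs]]].
  have hnl : ~~ is_leaf par p.
    apply/negP => /forallP /(_ (f u)); by rewrite hp eqxx.
  have hlp := hl p hnl.
  have e1 : td (f u) = td p + 1 by apply: tdanc; rewrite /= hp.
  have e2 : td (l p) = td p + 1 by apply: tdanc; rewrite /= hlp.
  case: (branch_anc hs hv) => i hi.
  have e3 := tdanc _ _ _ hi.
  rewrite /phi e3 e2 -e1; move: hlb; case: i hi {e3} => [|i] hi.
    case: hi => ->; rewrite (_ : is_last_born par l (l p) = true); last first.
      by rewrite /is_last_born hlp eqxx.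
    case: (is_last_born par l (f u)) => //= _; lia.
  case: (is_last_born par l (f u)) (is_last_born par l (f v)) => [] [] /= _; lia.
have huniq : forall u v w, arc u v -> arc u w -> v = w.
  move=> u v w /hstr [s [p [hs hp hlb hv hcs]]].
  rewrite harc hcs => hw.
  apply: finj.
  have := hbr _ hs => /card_le1_eqP; apply; rewrite inE ?codom_f ?andbT //.
  by rewrite -(in_set (fun x => x \in l p :: s)).
exists (fun u => [pick v | arc u v]); split; last first.
  move=> u v; case: pickP => [w hw|hn].
    apply/idP/eqP => [h|[<-]] //; by rewrite (huniq _ _ _ h hw).
  by rewrite hn.
pose B := \max_(x : V) phi x.
suff : forall k v, B - phi v < k -> exists n, pariter (fun u => [pick v | arc u v]) n v = None.
  move=> H v; exact: (H (B - phi v).+1 v (ltnSn _)).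
elim=> // k IH v hk.
case hpv: [pick w | arc v w] => [w|]; last by exists 1; rewrite /= hpv.
have hvw : arc v w by move: hpv; case: pickP => // x hx [<-].
have := hphi _ _ hvw; have := leq_bigmax (F:=phi) w; rewrite -/B => h1 h2.
case: (IH w _) => [|n hn]; first by lia.
by exists n.+1; rewrite pariterS hpv.
Qed.

Theorem lemma4p1 (V : finType) (arc : rel V) :
  oriented_graph arc -> (in_forest arc <-> k_burling 1 arc).
Proof.
move=> _; split; [exact: forest_burling | exact: burling_forest].
Qed.
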